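(* Let $\mu>0$ be an integer upper bound and $d>1$ a discount factor. Let $v\in\mathbb{Q}$ be a threshold value with representation $v=v[0]v[1]\dots v[m](v[m+1]v[m+2]\dots v[n])^{\omega}$. Let $W$ be a non-empty finite weight sequence over $\{-\mu,\dots,\mu\}$. Then: (1) $\mathrm{gap}(W-v[\dots|W|])>\frac1d\cdot\mathrm{DS}(v[|W|\dots],d)+\frac{\mu}{d-1}$ if and only if for all infinite extensions $Y\in\{-\mu,\dots,\mu\}^{\omega}$, $\mathrm{DS}(W\cdot Y,d)>v$; (2) $\mathrm{gap}(W-v[\dots|W|])\le\frac1d\cdot\mathrm{DS}(v[|W|\dots],d)-\frac{\mu}{d-1}$ if and only if for all infinite extensions $Y\in\{-\mu,\dots,\mu\}^{\omega}$, $\mathrm{DS}(W\cdot Y,d)\le v$.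
   Context: For a finite or infinite sequence $A=a_0a_1\dots$, $\mathrm{DS}(A,d)=\sum_i a_i/d^i$. The threshold $v$ is represented by an ultimately periodic sequence of integers $v[0]v[1]\dots v[m](v[m+1]\dots v[n])^{\omega}$ whose discounted sum with factor $d$ equals $v$; below this infinite sequence is also denoted $v$. For $i\ge0$, $v[\dots i]$ denotes the prefix of length $i$ of this infinite sequence and $v[i\dots]$ the remaining infinite suffix (starting at index $i$). For finite sequences of equal length, $W-U$ denotes their pointwise difference. The recoverable gap of a finite sequence $U$ is $\mathrm{gap}(\varepsilon)=0$ for the empty sequence and $\mathrm{gap}(U)=d^{|U|-1}\cdot\mathrm{DS}(U,d)$ otherwise. *)

(* Defs.v *)
From Stdlib Require Import Reals QArith ZArith List Lia Lra.
From Coquelicot Require Import Coquelicot.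
Import ListNotations.
Open Scope R_scope.

Definition DSfin (U : list Z) (d : R) : R :=
  fold_right Rplus 0
    (map (fun i => IZR (nth i U 0%Z) / d ^ i) (seq 0 (length U))).

Definition DSinf (A : nat -> Z) (d : R) : R :=
  Series (fun i => IZR (A i) / d ^ i).

Definition gap (U : list Z) (d : R) : R :=
  match U with
  | [] => 0
  | _ => d ^ (length U - 1) * DSfin U d
  end.

Definition vpre (v : nat -> Z) (i : nat) : list Z := map v (seq 0 i).

Definition vsuf (v : nat -> Z) (i : nat) : nat -> Z := fun j => v (i + j)%nat.

Definition ldiff (W U : list Z) : list Z :=
  map (fun p => (fst p - snd p)%Z) (combine W U).

Definition cat_inf (W : list Z) (Y : nat -> Z) : nat -> Z :=
  fun i => if (i <? length W)%nat then nth i W 0%Z else Y (i - length W)%nat.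

(* v = v[0]..v[m] (v[m+1]..v[n])^omega *)
Definition ult_periodic (v : nat -> Z) (m n : nat) : Prop :=
  (m < n)%nat /\ forall i, (m < i)%nat -> v (i + (n - m))%nat = v i.

Definition bounded_by (mu : Z) (a : Z) : Prop := (- mu <= a <= mu)%Z.

(* Main.v *)
Require Import Defs.
From Stdlib Require Import Reals QArith ZArith List Lia Lra.
From Coquelicot Require Import Coquelicot.
Import ListNotations.
Open Scope R_scope.

Lemma fold_scal (c : R) (g : nat -> R) (l : list nat) :
  fold_right Rplus 0 (map (fun i => c * g i) l) = c * fold_right Rplus 0 (map g l).
Proof. induction l; simpl; [ring | rewrite IHl; ring]. Qed.

Lemma DSfin_cons (d : R) a W : DSfin (a :: W) d = IZR a + / d * DSfin W d.
Proof.
  unfold DSfin. simpl length. change (seq 0 (S (length W))) with (0%nat :: seq 1 (length W)).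
  rewrite <- seq_shift. rewrite map_cons, map_map. cbn [fold_right].
  rewrite <- fold_scal. f_equal. { simpl. field. }
  f_equal. apply map_ext. intro i. simpl. unfold Rdiv. rewrite Rinv_mult. ring.
Qed.

Lemma DSfin_ldiff d W U : length W = length U ->
  DSfin (ldiff W U) d = DSfin W d - DSfin U d.
Proof.
  revert U; induction W as [|a W IH]; intros [|b U] H; simpl in H; try discriminate.
  - unfold DSfin; simpl; ring.
  - change (ldiff (a :: W) (b :: U)) with ((a - b)%Z :: ldiff W U).
    rewrite !DSfin_cons, IH by lia. rewrite minus_IZR. ring.
Qed.

Lemma geom_ser d : 1 < d -> is_series (fun i => / d ^ i) (d / (d - 1)).
Proof.
  intro Hd.
  replace (d / (d - 1)) with (/ (1 - / d)).
  2:{ field. split; lra. }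
  eapply is_series_ext. 2: apply is_series_geom.
  - intro n. simpl. apply pow_inv.
  - rewrite Rabs_pos_eq. apply (Rlt_le_trans _ (/ 1)); [apply Rinv_lt_contravar; lra|rewrite Rinv_1; lra]. left; apply Rinv_0_lt_compat; lra.
Qed.

Lemma bounded_ex d (a : nat -> Z) B : 1 < d -> (forall i, Rabs (IZR (a i)) <= B) ->
  ex_series (fun i => IZR (a i) / d ^ i).
Proof.
  intros Hd HB.
  apply (@ex_series_le R_AbsRing R_CompleteNormedModule _ (fun i => B * / d ^ i)).
  - intro n. change norm with Rabs. simpl. unfold Rdiv. rewrite Rabs_mult.
    rewrite (Rabs_pos_eq (/ d ^ n)). apply Rmult_le_compat_r. left; apply Rinv_0_lt_compat, pow_lt; lra.
    apply HB. left; apply Rinv_0_lt_compat, pow_lt; lra.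
  - apply (ex_series_scal_l B (fun i => / d ^ i)). eexists; apply geom_ser; auto.
Qed.

Lemma const_ser d (c : Z) : 1 < d -> DSinf (fun _ => c) d = IZR c * (d / (d - 1)).
Proof.
  intro Hd. unfold DSinf. unfold Rdiv at 1.
  rewrite (Series_scal_l (IZR c) (fun i => / d ^ i)).
  f_equal. apply is_series_unique, geom_ser; auto.
Qed.

Lemma cat_ser d W Y : 1 < d -> ex_series (fun i => IZR (Y i) / d ^ i) ->
  ex_series (fun i => IZR (cat_inf W Y i) / d ^ i) /\
  DSinf (cat_inf W Y) d = DSfin W d + / d ^ (length W) * DSinf Y d.
Proof.
  intros Hd HY. induction W as [|a W [IH1 IH2]].
  - split.
    + eapply ex_series_ext; [|exact HY]. intro n. unfold cat_inf. simpl. rewrite Nat.sub_0_r. auto.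
    + unfold DSinf, DSfin. simpl. rewrite Rinv_1, Rplus_0_l, Rmult_1_l.
      apply Series_ext. intro n. unfold cat_inf. simpl. rewrite Nat.sub_0_r. auto.
  - assert (Hsh : forall k, IZR (cat_inf (a :: W) Y (S k)) / d ^ (S k) =
                 / d * (IZR (cat_inf W Y k) / d ^ k)).
    { intro k. change (cat_inf (a :: W) Y (S k)) with (cat_inf W Y k).
      simpl. unfold Rdiv. rewrite Rinv_mult. ring. }
    assert (Hex : ex_series (fun i => IZR (cat_inf (a :: W) Y i) / d ^ i)).
    { apply ex_series_incr_1. eapply ex_series_ext. intro k; symmetry; apply Hsh.
      apply (ex_series_scal_l (/ d) (fun k => IZR (cat_inf W Y k) / d ^ k)). auto. }
    split; auto.
    unfold DSinf. rewrite Series_incr_1 by auto.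
    rewrite (Series_ext _ _ Hsh), Series_scal_l.
    fold (DSinf (cat_inf W Y) d). rewrite IH2, DSfin_cons.
    simpl length. simpl pow. rewrite Rinv_mult.
    change (cat_inf (a :: W) Y 0) with a. simpl. unfold DSinf, Rdiv. rewrite Rinv_1. ring.
Qed.

Lemma per_bounded (vs : nat -> Z) m n : ult_periodic vs m n ->
  exists B, forall i, Rabs (IZR (vs i)) <= B.
Proof.
  intros [Hmn Hp].
  assert (H1 : forall N, exists B, forall i, (i <= N)%nat -> Rabs (IZR (vs i)) <= B).
  { induction N as [|N [B HB]].
    - exists (Rabs (IZR (vs 0%nat))). intros i Hi. replace i with 0%nat by lia. lra.
    - exists (Rmax B (Rabs (IZR (vs (S N))))). intros i Hi.
      destruct (Nat.eq_dec i (S N)) as [->|Hne].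
      + apply Rmax_r.
      + eapply Rle_trans; [apply HB; lia | apply Rmax_l]. }
  destruct (H1 n) as [B HB]. exists B.
  intro i. induction i as [i IH] using (well_founded_induction lt_wf).
  destruct (Nat.le_gt_cases i n) as [Hi|Hi]; [auto|].
  pose (j := (i - (n - m))%nat).
  replace i with (j + (n - m))%nat by (unfold j; lia).
  rewrite Hp by (unfold j; lia). apply IH. unfold j; lia.
Qed.

Lemma Y_bounds d mu Y : 1 < d -> (forall i, bounded_by mu (Y i)) ->
  ex_series (fun i => IZR (Y i) / d ^ i) /\
  - IZR mu * (d / (d - 1)) <= DSinf Y d <= IZR mu * (d / (d - 1)).
Proof.
  intros Hd HY.
  assert (Hb : forall i, Rabs (IZR (Y i)) <= IZR mu).
  { intro i. destruct (HY i) as [h1 h2]. apply IZR_le in h1, h2.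
    rewrite opp_IZR in h1. apply Rabs_le; lra. }
  assert (Hex := bounded_ex d Y _ Hd Hb).
  assert (Hc : forall c : Z, ex_series (fun i => IZR c / d ^ i)).
  { intro c. apply (bounded_ex d (fun _ => c) (Rabs (IZR c))); auto. intro; apply Rle_refl. }
  assert (Hpos : forall n, 0 < d ^ n) by (intro; apply pow_lt; lra).
  assert (Z0 : Series (fun _ : nat => 0) = 0).
  { rewrite <- (Series_ext (fun n => 0 * 0)) by (intro; ring). rewrite Series_scal_l. ring. }
  split; [auto|split].
  - assert (H := Series_minus _ _ Hex (Hc (- mu)%Z)).
    fold (DSinf Y d) in H. replace (Series (fun i => IZR (- mu) / d ^ i)) with (DSinf (fun _ => (-mu)%Z) d) in H by reflexivity.
    rewrite const_ser, opp_IZR in H by auto.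
    assert (0 <= Series (fun n => IZR (Y n) / d ^ n - IZR (- mu) / d ^ n)).
    { rewrite <- Z0. apply Series_le. 2: apply (ex_series_minus _ _ Hex (Hc _)).
      intro k. split; [lra|]. replace (_ - _) with ((IZR (Y k) - IZR (- mu)) * / d ^ k) by (unfold Rdiv; ring).
      apply Rmult_le_pos. rewrite opp_IZR. specialize (Hb k). apply Rabs_le_between in Hb. lra.
      left; apply Rinv_0_lt_compat; auto. }
    rewrite opp_IZR in H0. lra.
  - assert (H := Series_minus _ _ (Hc mu) Hex).
    fold (DSinf Y d) in H. replace (Series (fun i => IZR mu / d ^ i)) with (DSinf (fun _ => mu) d) in H by reflexivity.
    rewrite const_ser in H by auto.
    assert (0 <= Series (fun n => IZR mu / d ^ n - IZR (Y n) / d ^ n)).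
    { rewrite <- Z0. apply Series_le. 2: apply (ex_series_minus _ _ (Hc _) Hex).
      intro k. split; [lra|]. replace (_ - _) with ((IZR mu - IZR (Y k)) * / d ^ k) by (unfold Rdiv; ring).
      apply Rmult_le_pos. specialize (Hb k). apply Rabs_le_between in Hb. lra.
      left; apply Rinv_0_lt_compat; auto. }
    lra.
Qed.

Theorem lemma3 (mu : Z) (d : R) (vq : Q) (vs : nat -> Z) (m n : nat)
  (W : list Z)
  (Hmu : (0 < mu)%Z) (Hd : 1 < d)
  (Hrep : ult_periodic vs m n) (Hval : DSinf vs d = Q2R vq)
  (HWne : W <> []) (HW : List.Forall (bounded_by mu) W) :
  (gap (ldiff W (vpre vs (length W))) d >
     / d * DSinf (vsuf vs (length W)) d + IZR mu / (d - 1)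
   <-> forall Y : nat -> Z, (forall i, bounded_by mu (Y i)) ->
         DSinf (cat_inf W Y) d > Q2R vq)
  /\
  (gap (ldiff W (vpre vs (length W))) d <=
     / d * DSinf (vsuf vs (length W)) d - IZR mu / (d - 1)
   <-> forall Y : nat -> Z, (forall i, bounded_by mu (Y i)) ->
         DSinf (cat_inf W Y) d <= Q2R vq).
Proof.
  set (k := length W).
  assert (Hk : (1 <= length W)%nat) by (destruct W; [congruence | simpl; lia]). fold k in Hk.
  destruct (per_bounded vs m n Hrep) as [B HB].
  assert (Hvlen : length (vpre vs k) = k) by (unfold vpre; rewrite length_map, length_seq; auto).
  assert (Hvs : DSinf vs d = DSfin (vpre vs k) d + / d ^ k * DSinf (vsuf vs k) d).
  { rewrite <- Hvlen at 2.
    rewrite <- (proj2 (cat_ser d (vpre vs k) (vsuf vs k) Hd (bounded_ex d _ B Hd (fun i => HB _)))).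
    unfold DSinf. apply Series_ext. intro i. f_equal. f_equal.
    unfold cat_inf. rewrite Hvlen. destruct (Nat.ltb_spec i k).
    - unfold vpre. rewrite nth_indep with (d' := vs 0%nat) by (rewrite length_map, length_seq; auto).
      rewrite map_nth, seq_nth by auto. auto.
    - unfold vsuf. f_equal. lia. }
  assert (Hgap : gap (ldiff W (vpre vs k)) d = d ^ (k - 1) * (DSfin W d - DSfin (vpre vs k) d)).
  { assert (Hl : length (ldiff W (vpre vs k)) = k).
    { unfold ldiff. rewrite length_map, length_combine, Hvlen. fold k. lia. }
    unfold gap. destruct (ldiff W (vpre vs k)) eqn:E.
    - simpl in Hl. lia.
    - simpl in Hl. rewrite <- E, DSfin_ldiff by (rewrite Hvlen; auto). rewrite E; simpl length; rewrite Hl; auto. }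
  assert (Hpk : d ^ k = d ^ (k - 1) * d).
  { replace k with (S (k - 1)) at 1 by lia. simpl. ring. }
  assert (Hp : 0 < d ^ (k - 1)) by (apply pow_lt; lra).
  fold k. rewrite Hgap. rewrite <- Hval, Hvs.
  set (p := d ^ (k - 1)) in *.
  set (S := DSfin W d - DSfin (vpre vs k) d) in *.
  set (Dv := DSinf (vsuf vs k) d).
  assert (Hcat : forall Y, (forall i, bounded_by mu (Y i)) ->
     (DSinf (cat_inf W Y) d - (DSfin (vpre vs k) d + / d ^ k * Dv)) * (p * d)
       = p * S * d + DSinf Y d - Dv /\
     - IZR mu * (d / (d - 1)) <= DSinf Y d <= IZR mu * (d / (d - 1))).
  { intros Y HY. destruct (Y_bounds d mu Y Hd HY) as [Hex Hb].
    rewrite (proj2 (cat_ser d W Y Hd Hex)). fold k. rewrite Hpk. split; auto.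
    unfold S. field. split; lra. }
  assert (HG : IZR mu * (d / (d - 1)) = d * (IZR mu / (d - 1))) by (field; lra).
  assert (Hpd : 0 < p * d) by nra.
  assert (bmu : forall c, (c = mu \/ c = - mu)%Z -> forall i : nat, bounded_by mu ((fun _ : nat => c) i)).
  { intros c [-> | ->] i; unfold bounded_by; lia. }
  split; split.
  - intros Hg Y HY. destruct (Hcat Y HY) as [E [Hb1 Hb2]].
    assert (0 < (DSinf (cat_inf W Y) d - (DSfin (vpre vs k) d + / d ^ k * Dv)) * (p * d)).
    { rewrite E. assert (d * (p * S) > d * (/ d * Dv + IZR mu / (d - 1))) by (apply Rmult_lt_compat_l; lra).
      replace (d * (/ d * Dv + IZR mu / (d - 1))) with (Dv + d * (IZR mu / (d-1))) in H by (field; lra). nra. }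
    nra.
  - intros H. destruct (Hcat _ (bmu (- mu)%Z (or_intror eq_refl))) as [E _].
    specialize (H _ (bmu (- mu)%Z (or_intror eq_refl))).
    rewrite const_ser, opp_IZR in E by auto.
    assert (0 < (DSinf (cat_inf W (fun _ => (- mu)%Z)) d - (DSfin (vpre vs k) d + / d ^ k * Dv)) * (p * d)) by nra.
    rewrite E in H0.
    assert (d * (p * S) > d * (/ d * Dv + IZR mu / (d - 1))).
    { replace (d * (/ d * Dv + IZR mu / (d - 1))) with (Dv + d * (IZR mu / (d-1))) by (field; lra). nra. }
    nra.
  - intros Hg Y HY. destruct (Hcat Y HY) as [E [Hb1 Hb2]].
    assert ((DSinf (cat_inf W Y) d - (DSfin (vpre vs k) d + / d ^ k * Dv)) * (p * d) <= 0).
    { rewrite E. assert (d * (p * S) <= d * (/ d * Dv - IZR mu / (d - 1))) by (apply Rmult_le_compat_l; lra).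
      replace (d * (/ d * Dv - IZR mu / (d - 1))) with (Dv - d * (IZR mu / (d-1))) in H by (field; lra). nra. }
    nra.
  - intros H. destruct (Hcat _ (bmu mu (or_introl eq_refl))) as [E _].
    specialize (H _ (bmu mu (or_introl eq_refl))).
    rewrite const_ser in E by auto.
    assert ((DSinf (cat_inf W (fun _ => mu)) d - (DSfin (vpre vs k) d + / d ^ k * Dv)) * (p * d) <= 0) by nra.
    rewrite E in H0.
    assert (d * (p * S) <= d * (/ d * Dv - IZR mu / (d - 1))).
    { replace (d * (/ d * Dv - IZR mu / (d - 1))) with (Dv - d * (IZR mu / (d-1))) by (field; lra). nra. }
    nra.
Qed.
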